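(* For $S\subseteq V$ let $\delta^-(S)$ be the set of fragments $(v_1,\dots,v_\ell)$ with $v_1\notin S$ and $\{v_1,\dots,v_\ell\}\cap S\neq\emptyset$, and for a fragment $F=(v_1,\dots,v_\ell)$ let $a_S(F)=|\{i\in\{1,\dots,\ell-1\}: v_i\notin S,\ v_{i+1}\in S\}|$. Then: (i) the fragment-incidence vector $x$ of every feasible solution satisfies $\sum_{F\in\delta^-(S)}x_F\ge\lceil\sum_{v\in S}q_v/Q\rceil$ for all $S\subseteq V$; (ii) for every $S\subseteq V$ and every $x\ge 0$, $\sum_{F}a_S(F)x_F\ge\sum_{F\in\delta^-(S)}x_F$, so the inequality in (i) implies the rounded capacity inequality $\sum_F a_S(F)x_F\ge\lceil\sum_{v\in S}q_v/Q\rceil$ for the same $S$.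
   Context: Instance data: a task set $V=\{1,\dots,n\}$, a depot $0$, $N=V\cup\{0\}$. For distinct $u,v\in N$ there are a travel time $t_{uv}\ge 0$ and travel cost $c_{uv}\ge0$. Each $v\in N$ has a duration $d_v\ge 0$, demand $q_v\ge 0$ and a time window $[\alpha_v,\beta_v]$; the depot has $d_0=q_0=0$, $[\alpha_0,\beta_0]=[0,T_{\max}]$. Vehicle capacity is $Q>0$ and there are $|K|$ vehicles. $D$ is a set of unordered pairs $\{u,v\}$ of distinct tasks, $V_D=\{v\in V:\exists \{u,v\}\in D\}$, each with nonnegative parameters $\delta^{\min}_{uv},\delta^{\max}_{uv},\delta^{\min}_{vu},\delta^{\max}_{vu}$; start times satisfy the dependency if either $b_u\le b_v$ and $\delta^{\min}_{uv}\le b_v-b_u\le\delta^{\max}_{uv}$, or $b_v\le b_u$ and $\delta^{\min}_{vu}\le b_u-b_v\le\delta^{\max}_{vu}$. A feasible solution consists of at most $|K|$ routes $(0,w_1,\dots,w_m,0)$ such that every task lies in exactly one route, each route has total demand at most $Q$, and there are start times $b_w\in[\alpha_w,\beta_w]$ with $b_{w_{i+1}}\ge b_{w_i}+d_{w_i}+t_{w_iw_{i+1}}$ and all pairs of $D$ satisfying their dependency. A fragment is a sequence $(v_1,\dots,v_\ell)$, $\ell\ge2$, with $v_1,v_\ell\in V_D\cup\{0\}$, intermediate nodes in $V\setminus V_D$, no task repeated, total demand of $v_1,\dots,v_{\ell-1}$ at most $Q$, admitting a time-feasible schedule. The fragments of a route are its maximal subsequences whose first and last elements are consecutive occurrences of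 nodes from $V_D\cup\{0\}$; the fragment-incidence vector $x$ (indexed by all fragments) has $x_F=1$ iff $F$ is a fragment of some route of the solution. *)

(* Defs.v *)
From HB Require Import structures.
From mathcomp Require Import all_boot all_order all_algebra.
From mathcomp Require Import boolp reals.
Set Implicit Arguments. Unset Strict Implicit. Unset Printing Implicit Defensive.
Import Order.TTheory GRing.Theory Num.Theory.
Local Open Scope ring_scope.

(* Nodes are 'I_n.+1 : node 0 (ord0) is the depot, nodes 1..n are the tasks V. *)
Record instance (R : realType) (n : nat) := Instance {
  tt   : 'I_n.+1 -> 'I_n.+1 -> R;   (* travel time t_uv *)
  cc   : 'I_n.+1 -> 'I_n.+1 -> R;   (* travel cost c_uv *)
  dur  : 'I_n.+1 -> R;
  dem  : 'I_n.+1 -> R;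
  alpha : 'I_n.+1 -> R;             (* window start *)
  beta  : 'I_n.+1 -> R;             (* window end *)
  Tmax : R;
  cap  : R;
  nveh : nat;
  Drel : rel 'I_n.+1;                (* D, as a symmetric relation: {u,v} in D iff Drel u v *)
  dmin : 'I_n.+1 -> 'I_n.+1 -> R;
  dmax : 'I_n.+1 -> 'I_n.+1 -> R
}.

Section Defs.
Variables (R : realType) (n : nat) (I : instance R n).
Local Notation node := 'I_n.+1.

Definition is_task (v : node) : bool := v != ord0.

Definition wf_instance : Prop :=
  [/\ (forall u v : node, u != v -> 0 <= tt I u v /\ 0 <= cc I u v),
      (forall v : node, 0 <= dur I v /\ 0 <= dem I v),
      [/\ dur I ord0 = 0, dem I ord0 = 0, alpha I ord0 = 0 & beta I ord0 = Tmax I],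
      0 < cap I &
      [/\ (forall u v, Drel I u v = Drel I v u),
          (forall u v, Drel I u v -> u != v /\ is_task u /\ is_task v) &
          (forall u v, Drel I u v -> 0 <= dmin I u v /\ 0 <= dmax I u v)]].

Definition inVD (v : node) : bool := [exists u, Drel I u v].
Definition special (v : node) : bool := (v == ord0) || inVD v.

Definition sched_ok (p : seq node) (tm : seq R) : Prop :=
  [/\ size tm = size p,
      (forall i, (i < size p)%N ->
         alpha I (nth ord0 p i) <= nth 0 tm i <= beta I (nth ord0 p i)) &
      (forall i, (i.+1 < size p)%N ->
         nth 0 tm i + dur I (nth ord0 p i) + tt I (nth ord0 p i) (nth ord0 p i.+1)
           <= nth 0 tm i.+1)].

Definition is_fragment (F : seq node) : Prop :=
  [/\ (2 <= size F)%N /\ special (head ord0 F) && special (last ord0 F),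
      (forall i, (0 < i < (size F).-1)%N ->
          is_task (nth ord0 F i) && ~~ inVD (nth ord0 F i)),
      uniq [seq v <- F | is_task v],
      \sum_(i < (size F).-1) dem I (nth ord0 F i) <= cap I &
      exists tm, sched_ok F tm].

Definition route_nodes (r : seq node) : seq node := ord0 :: rcons r ord0.

Definition frag_of_route (r : seq node) (F : seq node) : Prop :=
  let p := route_nodes r in
  exists i j, [/\ (i < j < size p)%N,
                  special (nth ord0 p i), special (nth ord0 p j),
                  (forall k, (i < k < j)%N -> ~~ special (nth ord0 p k)) &
                  F = take (j - i).+1 (drop i p)].

Definition dep_ok (b : node -> R) (u v : node) : Prop :=
  (b u <= b v /\ dmin I u v <= b v - b u <= dmax I u v) \/
  (b v <= b u /\ dmin I v u <= b u - b v <= dmax I v u).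

(* a solution is a list of routes, each given by its (nonempty) list of tasks *)
Definition feasible (sol : seq (seq node)) : Prop :=
  [/\ (size sol <= nveh I)%N,
      (forall r, r \in sol -> r != [::] /\ all is_task r),
      (forall v, is_task v -> count_mem v (flatten sol) = 1%N),
      (forall r, r \in sol -> \sum_(w <- r) dem I w <= cap I) &
      exists b : node -> R,
        (forall r, r \in sol -> exists tm, sched_ok (route_nodes r) tm /\
            (forall i, (0 < i <= size r)%N ->
               nth 0 tm i = b (nth ord0 (route_nodes r) i))) /\
        (forall u v, Drel I u v -> dep_ok b u v)].

End Defs.

Fixpoint allseqs (n k : nat) : seq (seq 'I_n.+1) :=
  match k with
  | 0 => [:: [::]]
  | k'.+1 => [::] :: [seq a :: s | a <- enum 'I_n.+1, s <- allseqs n k']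
  end.

Section Defs2.
Variables (R : realType) (n : nat) (I : instance R n).
Local Notation node := 'I_n.+1.

(* The (finite) list of all fragments; fragments have length <= n + 2. *)
Definition fragments : seq (seq node) :=
  undup [seq F <- allseqs n n.+3 | `[< is_fragment I F >] ].

Definition incidence (sol : seq (seq node)) (F : seq node) : R :=
  if `[< exists r, r \in sol /\ frag_of_route I r F >] then 1 else 0.

Definition in_dminus (S : {set node}) (F : seq node) : bool :=
  (head ord0 F \notin S) && has (fun v => v \in S) F.

Definition aS (S : {set node}) (F : seq node) : nat :=
  count (fun p : node * node => (p.1 \notin S) && (p.2 \in S)) (zip F (behead F)).

End Defs2.

(* Main.v *)
Require Import Defs.
From HB Require Import structures.
From mathcomp Require Import all_boot all_order all_algebra.
From mathcomp Require Import boolp reals.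
From mathcomp Require Import zify.
Import Order.TTheory GRing.Theory Num.Theory.
Set Implicit Arguments. Unset Strict Implicit. Unset Printing Implicit Defensive.
Local Open Scope ring_scope.

Lemma nth_td (T : Type) (x0 : T) (s : seq T) i m t :
  (t < m)%N -> nth x0 (take m (drop i s)) t = nth x0 s (i + t).
Proof. by move=> tm; rewrite nth_take // nth_drop. Qed.

Lemma size_td (T : Type) (s : seq T) i m :
  (i + m <= size s)%N -> size (take m (drop i s)) = m.
Proof. by move=> h; rewrite size_takel // size_drop; lia. Qed.

Lemma count_flat (T : eqType) (v : T) (ss : seq (seq T)) :
  count_mem v (flatten ss) = (\sum_(r <- ss) count_mem v r)%N.
Proof. by rewrite count_flatten sumnE big_map. Qed.

Lemma sum_rem (T : eqType) (f : T -> nat) s x : x \in s ->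
  (\sum_(y <- s) f y = f x + \sum_(y <- rem x s) f y)%N.
Proof. by move=> xs; rewrite (perm_big _ (perm_to_rem xs)) big_cons. Qed.

Lemma uniq_count1 (T : eqType) (s : seq T) :
  (forall x, count_mem x s <= 1)%N -> uniq s.
Proof.
elim: s => [//|a s IH] h /=; apply/andP; split.
  apply/count_memPn; have := h a; rewrite /= eqxx /=; lia.
apply: IH => x; have := h x; rewrite /=; lia.
Qed.

Lemma in_allseqs n k (s : seq 'I_n.+1) : (size s <= k)%N -> s \in allseqs n k.
Proof.
elim: k s => [|k IH] [|a s] //= h; rewrite ?inE ?eqxx //.
 apply/orP; right; apply: allpairs_f; first by rewrite mem_enum.
by apply: IH.
Qed.

Lemma sum_subseq (R : realType) (T : eqType) (f : T -> R) (s r : seq T) :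
  (forall x, 0 <= f x) -> subseq s r -> \sum_(x <- s) f x <= \sum_(x <- r) f x.
Proof.
move=> f0; elim: r s => [|y r IH] [|x s] //=; rewrite ?big_nil //.
- by move=> _; apply: sumr_ge0.
- case: eqP => [-> h|_ h].
    by rewrite !big_cons lerD2l; apply: IH.
  rewrite [X in _ <= X]big_cons; apply: le_trans (IH _ h) _; by rewrite lerDr.
Qed.


Section S.
Variables (R : realType) (n : nat) (I : instance R n).
Local Notation node := 'I_n.+1.

Lemma exists_frag (r : seq node) (S : {set node}) :
  ord0 \notin S -> has (fun v => v \in S) r ->
  exists F, frag_of_route I r F /\ in_dminus S F.
Proof.
move=> S0 hasr.
set p := route_nodes r.
have sp : size p = (size r).+2 by rewrite /p /route_nodes /= size_rcons.
have exk : exists k, (k < size p)%N && (nth ord0 p k \in S).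
  case/hasP: hasr => v vr vS; exists (index v r).+1.
  have ivr : (index v r < size r)%N by rewrite index_mem.
  rewrite /p /route_nodes /= size_rcons nth_rcons ivr nth_index // vS andbT; lia.
case: (ex_minnP exk) => k /andP[kp kS] kmin.
have k0 : (0 < k)%N.
  by case: k kS {kmin kp} => // kS; rewrite /p /route_nodes /= in kS; rewrite (negbTE S0) in kS.
have exi : exists i, (i < k)%N && special I (nth ord0 p i).
  by exists 0%N; rewrite k0 /special /p /route_nodes /= ?eqxx.
have ubi : forall i, (i < k)%N && special I (nth ord0 p i) -> (i <= k)%N.
  by move=> i /andP[/ltnW].
case: (ex_maxnP exi ubi) => i /andP[ik ispec] imax.
have exj : exists j, (k <= j < size p)%N && special I (nth ord0 p j).
  exists (size p).-1; apply/andP; split; first by apply/andP; split; lia.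
  by rewrite /special nth_last /p /route_nodes /= last_rcons ?eqxx.
case: (ex_minnP exj) => j /andP[/andP[kj jp] jspec] jmin.
exists (take (j - i).+1 (drop i p)); split.
  exists i, j; split => //; first by rewrite -/p; apply/andP; split; lia.
  move=> k' /andP[ik' k'j]; rewrite -/p; apply/negP => spk.
  case: (ltnP k' k) => hk.
    by have := imax k' (introT andP (conj hk spk)); lia.
  by have := jmin k' (introT andP (conj (introT andP (conj hk (ltn_trans k'j jp))) spk)); lia.
rewrite /in_dminus; apply/andP; split.
  rewrite -nth0 nth_td // addn0; apply/negP => iS.
  by have := kmin i (introT andP (conj (ltn_trans ik kp) iS)); lia.
apply/hasP; exists (nth ord0 p k) => //.
have -> : nth ord0 p k = nth ord0 (take (j - i).+1 (drop i p)) (k - i).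
  by rewrite nth_td; [congr nth; lia | lia].
apply: mem_nth; rewrite size_td; first lia.
have -> : (i + (j - i).+1 = j.+1)%N by lia.
exact: jp.
Qed.

End S.


Section S.
Variables (R : realType) (n : nat) (I : instance R n).
Local Notation node := 'I_n.+1.

Lemma frag_sub (r : seq node) (F : seq node) :
  frag_of_route I r F -> {subset F <= route_nodes r}.
Proof.
move=> [i [j [_ _ _ _ ->]]] x /mem_take /mem_drop //.
Qed.


Lemma frag_props (r : seq node) (F : seq node) :
  wf_instance I -> all (is_task (n:=n)) r -> uniq r -> \sum_(w <- r) dem I w <= cap I ->
  (exists tm, sched_ok I (route_nodes r) tm) ->
  frag_of_route I r F -> is_fragment I F.
Proof.
move=> wf allr ur hdem [tm [stm hb hc]] [i [j [/andP[ij jp] spi spj hmid ->]]].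
case: wf => _ hdq [_ dem0 _ _] _ _.
have dge0 : forall v, 0 <= dem I v by move=> v; case: (hdq v).
have lt_sz : forall k, (k <= j)%N -> (k < size (route_nodes r))%N.
  by move=> k h; apply: leq_ltn_trans h jp.
have szF : size (take (j - i).+1 (drop i (route_nodes r))) = (j - i).+1.
  rewrite size_td //; have -> : (i + (j - i).+1 = j.+1)%N by lia.
  exact: jp.
have fp : [seq v <- route_nodes r | is_task (n:=n) v] = r.
  rewrite /route_nodes /= filter_rcons /is_task eqxx /=.
  exact/all_filterP.
have subF : subseq [seq v <- take (j - i).+1 (drop i (route_nodes r)) | is_task (n:=n) v] r.
  rewrite -[X in subseq _ X]fp subseq_filter filter_all andTb.
  apply: subseq_trans (filter_subseq _ _) _.
  apply: subseq_trans (take_subseq _ _) (drop_subseq _ _).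
split.
- split; first by rewrite szF; lia.
  apply/andP; split.
    by rewrite -nth0 nth_td // addn0.
  by rewrite -nth_last szF /= nth_td // subnKC // ltnW.
- move=> t /andP[t0 tlt]; rewrite szF /= in tlt.
  rewrite nth_td; last lia.
  move: (hmid (i + t)); rewrite /special negb_or /is_task; apply.
  apply/andP; split; lia.
- exact: subseq_uniq subF ur.
- rewrite szF /=.
  apply: le_trans hdem.
  apply: le_trans (_ : \sum_(t < (j - i).+1)
     dem I (nth ord0 (take (j - i).+1 (drop i (route_nodes r))) t) <= _).
    by rewrite big_ord_recr /= lerDl.
  rewrite -(big_mkord xpredT (fun t => dem I (nth ord0 (take (j - i).+1 (drop i (route_nodes r))) t))).
  rewrite [X in X <= _](_ : _ = \sum_(w <- take (j - i).+1 (drop i (route_nodes r))) dem I w);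
    last by rewrite (big_nth ord0) szF.
  apply: le_trans (sum_subseq _ subF); last by [].
  rewrite big_filter [X in _ <= X]big_mkcond /=; apply: ler_sum => w _.
  by case: ifP => // /negbT; rewrite /is_task negbK => /eqP ->; rewrite dem0.
- exists (take (j - i).+1 (drop i tm)); split.
  + rewrite size_td ?szF //; rewrite stm; have -> : (i + (j - i).+1 = j.+1)%N by lia.
    exact: jp.
  + move=> t; rewrite szF => ht; rewrite !nth_td //; apply: hb; apply: lt_sz; lia.
  + move=> t; rewrite szF => ht; rewrite !nth_td //; try lia.
    rewrite addnS; apply: hc; apply: lt_sz; lia.
Qed.

Lemma size_route_le (r : seq node) :
  all (is_task (n:=n)) r -> uniq r -> (size r <= n)%N.
Proof.
move=> allr ur.
have u : uniq (ord0 :: r).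
  rewrite /= ur andbT; apply/negP => h.
  by have := allP allr _ h; rewrite /is_task eqxx.
move/card_uniqP: u => e.
by have := max_card (mem (ord0 :: r)); rewrite e card_ord /=.
Qed.

Lemma frag_in (r : seq node) (F : seq node) :
  wf_instance I -> all (is_task (n:=n)) r -> uniq r -> \sum_(w <- r) dem I w <= cap I ->
  (exists tm, sched_ok I (route_nodes r) tm) ->
  frag_of_route I r F -> F \in fragments I.
Proof.
move=> wf allr ur hdem hs fr.
rewrite /fragments mem_undup mem_filter; apply/andP; split.
  by apply/asboolP; apply: (frag_props wf allr ur hdem hs fr).
apply: in_allseqs.
have := size_route_le allr ur.
case: fr => [i [j [_ _ _ _ ->]]].
have := size_subseq (subseq_trans (take_subseq (drop i (route_nodes r)) (j - i).+1) (drop_subseq _ i)).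
rewrite /route_nodes /= size_rcons; lia.
Qed.

End S.


Section S.
Variables (R : realType) (n : nat) (I : instance R n).
Local Notation node := 'I_n.+1.

Lemma route_unique (sol : seq (seq node)) (v : node) r1 r2 :
  feasible I sol -> is_task v -> r1 \in sol -> r2 \in sol -> v \in r1 -> v \in r2 -> r1 = r2.
Proof.
case=> _ _ hc _ _ vt h1 h2 v1 v2.
apply/eqP/negPn/negP => ne.
have h2' : r2 \in rem r1 sol by apply: rem_mem => //; rewrite eq_sym.
have := hc v vt; rewrite count_flat (sum_rem _ h1) (sum_rem _ h2').
have c1 : (0 < count_mem v r1)%N by rewrite -has_count has_pred1.
have c2 : (0 < count_mem v r2)%N by rewrite -has_count has_pred1.
lia.
Qed.

Lemma route_uniq (sol : seq (seq node)) r :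
  feasible I sol -> r \in sol -> uniq r.
Proof.
move=> fs rs; have fs' := fs; case: fs' => _ hr hc _ _.
apply: uniq_count1 => x; case: (boolP (is_task x)) => xt.
  by have := hc x xt; rewrite count_flat (sum_rem _ rs); lia.
have -> : count_mem x r = 0%N; last by [].
apply/count_memPn/negP => xr.
by have := allP (hr r rs).2 x xr; rewrite (negbTE xt).
Qed.

Lemma cnt_pos (S : {set node}) (a : node) (s : seq node) :
  a \notin S -> has (fun v => v \in S) s ->
  (0 < count (fun p : node * node => (p.1 \notin S) && (p.2 \in S)) (zip (a :: s) s))%N.
Proof.
elim: s a => [//|b s IH] a aS /= hb.
case: (boolP (b \in S)) => bS; first by rewrite aS.
move: hb; rewrite ?(negbTE bS) /= => hb; by have := IH b bS hb; rewrite andbF add0n.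
Qed.

Lemma aS_pos (S : {set node}) (F : seq node) : in_dminus S F -> (0 < aS S F)%N.
Proof.
case: F => [|a s]; rewrite /in_dminus /=; first by rewrite andbF.
case/andP=> aS; rewrite (negbTE aS) /= => hs.
exact: cnt_pos.
Qed.

Lemma mem_frag (F : seq node) : F \in fragments I -> is_fragment I F.
Proof. by rewrite mem_undup mem_filter => /andP[/asboolP]. Qed.

End S.

Unset Implicit Arguments. Set Strict Implicit. Set Printing Implicit Defensive.

Theorem mainTheorem9 (R : realType) (n : nat) (I : instance R n) :
  wf_instance I ->
  (forall sol : seq (seq 'I_n.+1), feasible I sol ->
     forall S : {set 'I_n.+1}, ord0 \notin S ->
       (Num.ceil ((\sum_(v in S) dem I v) / cap I))%:~R
         <= \sum_(F <- fragments I | in_dminus S F) incidence I sol F)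
  /\
  (forall S : {set 'I_n.+1}, ord0 \notin S ->
     forall x : seq 'I_n.+1 -> R, (forall F, is_fragment I F -> 0 <= x F) ->
       \sum_(F <- fragments I | in_dminus S F) x F
         <= \sum_(F <- fragments I) (aS S F)%:R * x F
       /\
       ((Num.ceil ((\sum_(v in S) dem I v) / cap I))%:~R
           <= \sum_(F <- fragments I | in_dminus S F) x F ->
        (Num.ceil ((\sum_(v in S) dem I v) / cap I))%:~R
           <= \sum_(F <- fragments I) (aS S F)%:R * x F)).
Proof.
move=> wf; split.
- move=> sol fs S S0.
  have fs' := fs; case: fs' => _ hr hc hdem [b [hsch _]].
  case: (wf) => _ hdq [_ dem0 _ _] capgt _.
  have dge0 : forall v, 0 <= dem I v by move=> v; case: (hdq v).
  set fr := fragments I.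
  have taskS : forall v, v \in S -> is_task v.
    by move=> v vS; rewrite /is_task; apply/eqP => e; by rewrite -e vS in S0.
  have Hex : forall v : 'I_n.+1, exists F : seq 'I_n.+1, v \in S ->
      [/\ F \in fr, in_dminus S F, incidence I sol F = 1 &
          exists r, [/\ r \in sol, v \in r & frag_of_route I r F]].
    move=> v; case: (boolP (v \in S)) => vS; last by exists [::].
    have vt := taskS v vS.
    have : v \in flatten sol by rewrite -has_pred1 has_count hc.
    case/flattenP => r rs vr.
    have [F [frF dF]] := @exists_frag _ _ I r S S0 (introT hasP (ex_intro2 _ _ v vr vS)).
    have [tm [htm _]] := hsch r rs.
    exists F => _; split => //.
    + exact: (frag_in wf (hr r rs).2 (route_uniq fs rs) (hdem r rs) (ex_intro _ tm htm) frF).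
    + by rewrite /incidence asboolT //; exists r.
    + by exists r.
  have [f hf] := choice Hex.
  have key : forall F, \sum_(v in S | f v == F) dem I v <= cap I.
    move=> F; case: (pickP [pred v | (v \in S) && (f v == F)]) =>
      [v0 /andP[v0S /eqP fv0]|none]; last first.
      by rewrite big_pred0 ?ltW // => v; have := none v.
    have [_ dF _ [r0 [r0s v0r0 fr0]]] := hf v0 v0S.
    rewrite fv0 in dF fr0.
    move: (dF) => /andP[_ /hasP[u uF uS]].
    have ut := taskS u uS.
    have mem_r : forall r', frag_of_route I r' F -> u \in r'.
      move=> r' fr'; have := frag_sub fr' uF.
      by rewrite /route_nodes !inE mem_rcons !inE (negbTE ut).
    have inr0 : forall v, v \in S -> f v = F -> v \in r0.
      move=> v vS fv; have [_ _ _ [r [rs vr frr]]] := hf v vS.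
      rewrite fv in frr.
      by rewrite (route_unique fs ut r0s rs (mem_r _ fr0) (mem_r _ frr)).
    apply: le_trans (hdem r0 r0s).
    rewrite (big_uniq _ (route_uniq fs r0s)).
    rewrite [X in X <= _]big_mkcond [X in _ <= X]big_mkcond /=; apply: ler_sum => v _.
    case: ifP => [/andP[vS /eqP fv]|_]; first by rewrite (inr0 v vS fv).
    by case: ifP.
  set Q := fun F => in_dminus S F && (incidence I sol F == 1).
  have hsum : \sum_(F <- fr | in_dminus S F) incidence I sol F = (count Q fr)%:R.
    rewrite (eq_bigr (fun F => if incidence I sol F == 1 then 1 else 0)); last first.
      by move=> F _; rewrite /incidence; case: ifP => _; rewrite ?eqxx // eq_sym oner_eq0.
    by rewrite -big_mkcondr big_const_seq iter_addr_0.
  have hD : \sum_(v in S) dem I v <= (count Q fr)%:R * cap I.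
    have e : forall v, v \in S ->
        dem I v = \sum_(F <- fr | Q F) (if f v == F then dem I v else 0).
      move=> v vS; rewrite -big_mkcondr big_const_seq iter_addr_0.
      have [fin dF incF _] := hf v vS.
      rewrite (@eq_count _ _ (pred1 (f v))); last first.
        move=> F /=; case: (eqVneq (f v) F) => [<-|ne]; first by rewrite /Q dF incF !eqxx.
        by rewrite andbF.
      by rewrite count_uniq_mem ?fin ?mulr1n // /fr /fragments undup_uniq.
    rewrite (eq_bigr _ e) exchange_big /=.
    apply: le_trans (_ : \sum_(F <- fr | Q F) cap I <= _).
      by apply: ler_sum => F _; rewrite -big_mkcondr; apply: key.
    by rewrite big_const_seq iter_addr_0 mulr_natl.
  rewrite hsum.
  have hc' : Num.ceil ((\sum_(v in S) dem I v) / cap I) <= (count Q fr)%:Z.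
    by rewrite ceil_le_int ler_pdivrMr // -pmulrn.
  by rewrite -(ler_int R) in hc'; rewrite (le_trans hc') // -pmulrn.
- move=> S S0 x hx.
  have h1 : \sum_(F <- fragments I | in_dminus S F) x F
         <= \sum_(F <- fragments I) (aS S F)%:R * x F.
    rewrite big_mkcond !big_seq; apply: ler_sum => F Fin.
    have xF := hx F (mem_frag Fin).
    case: ifP => d; last by apply: mulr_ge0.
    apply: ler_peMl => //; rewrite ler1n; exact: aS_pos.
  by split => // h; apply: le_trans h h1.
Qed.
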